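(* Let $F_2$ be the free group on $\{x,y\}$, $\sigma = (\{x\}, y)$, $\tau = (\{y\}, x)$. Let $w$ be a cyclic word in $F_2$ and let $\psi$ be a chain of the form (C1) $\tau^{m_k}\sigma^{l_k} \cdots \tau^{m_1}\sigma^{l_1}$ (respectively (C2) $\tau^{-m_k}\sigma^{-l_k} \cdots \tau^{-m_1}\sigma^{-l_1}$), with $k\in\mathbb{N}$ and all $l_i, m_i \ge 0$. If $\psi$ contains at least $\|w\|$ factors of $\sigma$ (respectively $\sigma^{-1}$), i.e. $\sum_i l_i \ge \|w\|$, then no proper cancellation occurs in passing from $\psi(w)$ to $\sigma\psi(w)$ (respectively from $\psi(w)$ to $\sigma^{-1}\psi(w)$). If $\psi$ contains at least $\|w\|$ factors of $\tau$ (respectively $\tau^{-1}$), i.e. $\sum_i m_i \ge \|w\|$, then no proper cancellation occurs in passing from $\psi(w)$ to $\tau\psi(w)$ (respectively from $\psi(w)$ to $\tau^{-1}\psi(w)$).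
   Context: $\sigma$ is the automorphism with $\sigma(x) = xy$, $\sigma(y) = y$; $\tau$ is the automorphism with $\tau(y) = yx$, $\tau(x) = x$. A cyclic word is the set of all cyclic permutations of a cyclically reduced word; $\|w\|$ is its length. An automorphism $\alpha \in \{\sigma^{\pm1},\tau^{\pm1}\}$ is applied to a cyclic word $w$ by replacing each letter $c$ by $\alpha(c)$ and cyclically freely reducing. For $\alpha = \sigma^{\pm1}$, a subword $xy^rx^{-1}$ ($r \neq 0$) of $w$ is mapped to itself although cancellation occurs in its image (e.g. $\sigma(xy^rx^{-1}) = xy\cdot y^r\cdot y^{-1}x^{-1}$); similarly for $\alpha=\tau^{\pm1}$ and subwords $yx^ry^{-1}$ ($r\neq 0$). Such cancellation is called trivial cancellation; any cancellation that is not trivial is called proper cancellation (e.g. $\sigma$ applied to a subword $xy^{-r}x$, $r\ge1$, yields $xy^{-r+1}xy$, which involves proper cancellation). *)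

(* Defs.v *)
From HB Require Import structures.
From mathcomp Require Import all_boot.
Set Implicit Arguments. Unset Strict Implicit. Unset Printing Implicit Defensive.

(* Letters of F_2 = F(x,y):  lx = x, lX = x^-1, ly = y, lY = y^-1. *)
Inductive letter := lx | lX | ly | lY.

Definition letter_eqb (a b : letter) : bool :=
  match a, b with
  | lx, lx | lX, lX | ly, ly | lY, lY => true
  | _, _ => false
  end.

Lemma letter_eqP : Equality.axiom letter_eqb.
Proof. by case; case; constructor. Qed.

HB.instance Definition _ := hasDecEq.Build letter letter_eqP.

Definition linv (a : letter) : letter :=
  match a with lx => lX | lX => lx | ly => lY | lY => ly end.

Definition is_xletter (a : letter) : bool := (a == lx) || (a == lX).
Definition is_yletter (a : letter) : bool := (a == ly) || (a == lY).

Fixpoint reduced (w : seq letter) : bool :=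
  match w with
  | a :: ((b :: _) as t) => (b != linv a) && reduced t
  | _ => true
  end.

Definition cyc_reduced (w : seq letter) : bool :=
  reduced w && (if w is a :: t then last a t != linv a else true).

Definition free_reduce (w : seq letter) : seq letter :=
  foldr (fun c acc => match acc with
                      | d :: t => if d == linv c then t else c :: acc
                      | [::] => [:: c]
                      end) [::] w.

Fixpoint strip_ends (fuel : nat) (w : seq letter) : seq letter :=
  match fuel with
  | 0 => w
  | n.+1 =>
      match w with
      | a :: t =>
          if (t != [::]) && (last a t == linv a) then strip_ends n (behead (belast a t))
          else w
      | [::] => w
      end
  end.

Definition cyc_reduce (w : seq letter) : seq letter :=
  let v := free_reduce w in strip_ends (size v) v.

Definition sigma_img (a : letter) : seq letter :=
  match a with lx => [:: lx; ly] | lX => [:: lY; lX] | ly => [:: ly] | lY => [:: lY] end.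
Definition sigmaI_img (a : letter) : seq letter :=
  match a with lx => [:: lx; lY] | lX => [:: ly; lX] | ly => [:: ly] | lY => [:: lY] end.
Definition tau_img (a : letter) : seq letter :=
  match a with ly => [:: ly; lx] | lY => [:: lX; lY] | lx => [:: lx] | lX => [:: lX] end.
Definition tauI_img (a : letter) : seq letter :=
  match a with ly => [:: ly; lX] | lY => [:: lx; lY] | lx => [:: lx] | lX => [:: lX] end.

Definition subst (f : letter -> seq letter) (w : seq letter) : seq letter :=
  flatten (map f w).

(* application of the automorphism to a cyclic word: substitute and cyclically
   freely reduce (the result is a representative of the image cyclic word) *)
Definition act (f : letter -> seq letter) (w : seq letter) : seq letter :=
  cyc_reduce (subst f w).

Definition cancelled_pairs (f : letter -> seq letter) (w : seq letter) : nat :=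
  (size (subst f w) - size (act f w)) %/ 2.

(* a trivial-cancellation subword g h^r g^-1 (r <> 0, h the other generator)
   starting at the first letter of s (s read cyclically via rotations) *)
Definition trivial_at (g : letter) (isother : letter -> bool) (s : seq letter) : bool :=
  match s with
  | a :: t => (a == g) &&
      (let k := find (fun c => ~~ isother c) t in (0 < k) && (nth g t k == linv g))
  | [::] => false
  end.

Definition trivial_count (g : letter) (isother : letter -> bool) (w : seq letter) : nat :=
  count (fun i => trivial_at g isother (rot i w)) (iota 0 (size w)).

(* For sigma^{+-1}: trivial cancellation comes from subwords x y^r x^-1;
   for tau^{+-1}: from subwords y x^r y^-1.  No proper cancellation means all
   cancellation is accounted for by these trivial cancellations (each of which
   cancels exactly one pair of letters). *)
Definition no_proper_cancellation_sigma (f : letter -> seq letter) (w : seq letter) : Prop :=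
  cancelled_pairs f w = trivial_count lx is_yletter w.
Definition no_proper_cancellation_tau (f : letter -> seq letter) (w : seq letter) : Prop :=
  cancelled_pairs f w = trivial_count ly is_xletter w.

(* Chains.  A chain tau^{m_k} sigma^{l_k} ... tau^{m_1} sigma^{l_1} is given by
   the sequence [:: (l_1, m_1); ...; (l_k, m_k)]; the rightmost factor acts first. *)
Definition chain_apply (fs ft : letter -> seq letter) (c : seq (nat * nat))
  (w : seq letter) : seq letter :=
  foldl (fun v lm => iter lm.2 (act ft) (iter lm.1 (act fs) v)) w c.

Definition sum_l (c : seq (nat * nat)) : nat := \sum_(p <- c) p.1.
Definition sum_m (c : seq (nat * nat)) : nat := \sum_(p <- c) p.2.

(* Main.v *)
Require Import Defs.
From mathcomp Require Import all_boot zify.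
Set Implicit Arguments. Unset Strict Implicit. Unset Printing Implicit Defensive.

Definition R (a b : letter) : bool := b != linv a.
Definition gk (g a : letter) : bool := (a == g) || (a == linv g).
Definition okgh (g h : letter) : bool :=
  [|| (g == lx) && (h == ly), (g == lx) && (h == lY), (g == ly) && (h == lx) | (g == ly) && (h == lX)].

Definition nimg (g h a : letter) : seq letter :=
  if a == g then [:: g; h] else if a == linv g then [:: linv h; linv g] else [:: a].

Definition out (g h : letter) (p : option letter) (a : letter) (n : option letter) : seq letter :=
  if a == g then (if n == Some (linv h) then [:: g] else [:: g; h])
  else if a == linv g then (if p == Some h then [:: linv g] else [:: linv h; linv g])
  else if a == linv h then (if p == Some g then [::] else [:: a])
  else if a == h then (if n == Some (linv g) then [::] else [:: a])
  else [:: a].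

Definition fstep (c : letter) (acc : seq letter) : seq letter :=
  match acc with d :: t => if d == linv c then t else c :: acc | [::] => [:: c] end.

Fixpoint lb (g h : letter) (p q : option letter) (v : seq letter) : seq (seq letter) :=
  match v with
  | [::] => [::]
  | a :: t => out g h p a (if t is b :: _ then Some b else q) :: lb g h (Some a) q t
  end.

Definition cblocks g h (v : seq letter) := lb g h (Some (last lx v)) (Some (head lx v)) v.
Definition C g h v := flatten (cblocks g h v).
Definition B0 g h (u : seq letter) :=
  out g h (Some (last lx u)) (head lx u) (Some (head lx (rot 1 u))).

Lemma linvK a : linv (linv a) = a. Proof. by case: a. Qed.
Lemma linv_eq a b : (a == linv b) = (linv a == b).
Proof. by case: a; case: b. Qed.

Lemma reducedE s : reduced s = sorted R s.
Proof.
elim: s => [|a t IH] //; case: t IH => [|b t] IH //.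
have -> : reduced [:: a, b & t] = R a b && reduced (b :: t) by [].
by rewrite IH.
Qed.

Lemma cycE s : cyc_reduced s = cycle R s.
Proof.
case: s => [|a t] //=; rewrite /cyc_reduced reducedE /= rcons_path.
by rewrite /R linv_eq eq_sym.
Qed.

Lemma frE w : free_reduce w = foldr fstep [::] w. Proof. by []. Qed.

Lemma subst_cons f a t : subst f (a :: t) = f a ++ subst f t. Proof. by []. Qed.

Lemma fr_lb g h t a : okgh g h -> sorted R (a :: t) ->
  free_reduce (subst (nimg g h) (a :: t)) = flatten (lb g h None None (a :: t)).
Proof.
move=> ok; elim: t a => [|b t IH] a.
  by move=> _; move: ok; rewrite frE /=; case: g h => [] [] // _; case: a.
rewrite [sorted _ _]/= => /andP [Rab Hs].
rewrite frE subst_cons foldr_cat -frE IH //.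
clear IH; move: Hs Rab; case: t => [|c [|d t']].
- by move=> _ Rab; move: ok Rab; case: g h => [] [] // _; case: a; case: b.
- rewrite /= andbT => Rbc Rab; move: ok Rab; case: g h => [] [] // _; move: Rbc;
  by case: a; case: b => //; case: c.
- move=> /andP [Rbc /andP [Rcd _]] Rab.
  have -> : lb g h None None [:: b, c, d & t'] =
    out g h None b (Some c) :: out g h (Some b) c (Some d) :: lb g h (Some c) None (d :: t') by [].
  have -> : lb g h None None [:: a, b, c, d & t'] = out g h None a (Some b) ::
    out g h (Some a) b (Some c) :: out g h (Some b) c (Some d) :: lb g h (Some c) None (d :: t') by [].
  move: (lb g h (Some c) None (d :: t')) => L; rewrite /=.
  move: ok Rab Rbc Rcd; move: (flatten L) => R'.
  by case: g h => [] [] // _; case: a; case: b => //; case: c => //; case: d.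
Qed.

Lemma lb_rcons g h p q s a :
  lb g h p q (rcons s a) = rcons (lb g h p (Some a) s) (out g h (last p (map Some s)) a q).
Proof.
elim: s p => [|b s IH] p //=.
by rewrite IH; case: s {IH}.
Qed.

Lemma size_lb g h p q v : size (lb g h p q v) = size v.
Proof. by elim: v p => [|a t IH] p //=; rewrite IH. Qed.

Lemma cblocks_cons g h a t :
  cblocks g h (a :: t) = B0 g h (a :: t) :: behead (cblocks g h (a :: t)).
Proof. by rewrite /cblocks /B0 rot1_cons /=; case: t. Qed.

Lemma last_map_Some (s : seq letter) a : last (Some a) (map Some s) = Some (last a s).
Proof. by elim: s a => [|b s IH] a //=. Qed.

Lemma cblocks_rot1 g h v : cblocks g h (rot 1 v) = rot 1 (cblocks g h v).
Proof.
case: v => [|a [|b t]] //.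
rewrite rot1_cons /cblocks /= rot1_cons lb_rcons /= last_map_Some.
by rewrite last_rcons; case: t.
Qed.

Lemma cblocks_rot g h i v : cblocks g h (rot i v) = rot i (cblocks g h v).
Proof.
elim: i => [|i IH]; first by rewrite !rot0.
case: (ltnP i (size v)) => Hi.
  rewrite (rotS Hi) (@rotS _ i (cblocks g h v)); last by rewrite size_lb.
  by rewrite cblocks_rot1 IH.
rewrite !rot_oversize // ?size_lb; exact: leqW.
Qed.

Definition Rest g h (u : seq letter) := flatten (behead (cblocks g h u)).

Lemma C_cons g h a t : C g h (a :: t) = B0 g h (a :: t) ++ Rest g h (a :: t).
Proof. by rewrite /C /Rest cblocks_cons. Qed.

Lemma C_rot1 g h a t : C g h (rot 1 (a :: t)) = Rest g h (a :: t) ++ B0 g h (a :: t).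
Proof.
by rewrite /C cblocks_rot1 /Rest [cblocks _ _ (a :: t)]cblocks_cons rot1_cons flatten_rcons.
Qed.

Definition rots (s : seq letter) := [seq rot i s | i <- iota 0 (size s)].

Lemma rots_gen (bs : seq (seq letter)) (r : seq letter) :
  [seq rot j (flatten bs ++ r) | j <- iota 0 (size (flatten bs))] =
  flatten [seq [seq rot j (flatten (drop i bs) ++ r ++ flatten (take i bs))
               | j <- iota 0 (size (nth [::] bs i))] | i <- iota 0 (size bs)].
Proof.
elim: bs r => [|b bs IH] r //=.
rewrite size_cat iotaD map_cat add0n -(addn0 (size b)) iotaDl -map_comp.
rewrite addn0 cats0; congr (_ ++ _).
have -> : iota 1 (size bs) = map succn (iota 0 (size bs)) by exact: (iotaDl 1 0).
apply: (@etrans _ _ [seq rot i (flatten bs ++ (r ++ b)) | i <- iota 0 (size (flatten bs))]).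
  apply/eq_in_map => j; rewrite mem_iota add0n => /andP [_ Hj] /=.
  rewrite addnC rotD; last by rewrite !size_cat; lia.
  by rewrite -catA rot_size_cat -catA.
rewrite IH -map_comp; congr flatten; apply: eq_map => i /=.
by rewrite !catA.
Qed.

Lemma rots_flatten (bs : seq (seq letter)) :
  rots (flatten bs) =
  flatten [seq [seq rot j (flatten (rot i bs)) | j <- iota 0 (size (nth [::] bs i))]
          | i <- iota 0 (size bs)].
Proof.
rewrite /rots; have := rots_gen bs [::]; rewrite cats0 => ->; congr flatten.
by apply: eq_map => i /=; rewrite /rot flatten_cat.
Qed.

Definition rotsB g h (u : seq letter) := [seq rot j (C g h u) | j <- iota 0 (size (B0 g h u))].

Lemma head_rot (s : seq letter) i : i < size s -> head lx (rot i s) = nth lx s i.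
Proof.
move=> Hi; rewrite /rot -nth0 nth_cat size_drop subn_gt0 Hi nth_drop addn0 //.
Qed.

Lemma nth_rot0 (T : Type) (x0 : T) (s : seq T) i : i < size s -> nth x0 (rot i s) 0 = nth x0 s i.
Proof.
move=> Hi; rewrite /rot nth_cat size_drop subn_gt0 Hi nth_drop addn0 //.
Qed.

Lemma nth_cblocks g h v i : i < size v -> nth [::] (cblocks g h v) i = B0 g h (rot i v).
Proof.
move=> Hi; rewrite -nth_rot0 ?size_lb // -cblocks_rot.
case E: (rot i v) => [|a t]; first by move: Hi; rewrite -(size_rot i v) E.
by rewrite cblocks_cons.
Qed.

Lemma rots_C g h v :
  rots (C g h v) = flatten [seq rotsB g h (rot i v) | i <- iota 0 (size v)].
Proof.
rewrite /C rots_flatten size_lb; congr flatten; apply/eq_in_map => i.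
rewrite mem_iota add0n => /andP [_ Hi].
by rewrite /rotsB nth_cblocks // -cblocks_rot.
Qed.

Definition wl (k : nat) (u : seq letter) := head lx (iter k (rot 1) u).

Lemma cycle_iter k u : cycle R u -> cycle R (iter k (rot 1) u).
Proof. by elim: k => [|k IH] //= Hu; rewrite rot_cycle IH. Qed.

Lemma R_refl a : R a a. Proof. by case: a. Qed.

Lemma cycle_R01 u : cycle R u -> R (head lx u) (head lx (rot 1 u)).
Proof.
case: u => [|a [|b t]] // Hu; first by rewrite /= R_refl.
by rewrite rot1_cons /=; move: Hu => /= /andP [].
Qed.

Lemma cycle_Rlast u : cycle R u -> R (last lx u) (head lx u).
Proof.
case: u => [|a t] //= ; rewrite rcons_path => /andP [_ ->] //.
Qed.

Lemma last_rot1 u : last lx (rot 1 u) = head lx u.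
Proof. by case: u => [|a t] //; rewrite rot1_cons last_rcons. Qed.

Lemma B0_rot1 g h u :
  B0 g h (rot 1 u) = out g h (Some (head lx u)) (wl 1 u) (Some (wl 2 u)).
Proof. by rewrite /B0 last_rot1. Qed.

Lemma B0_E g h u : B0 g h u = out g h (Some (last lx u)) (wl 0 u) (Some (wl 1 u)).
Proof. by []. Qed.

Lemma W1 g h p a b c : okgh g h -> R p a -> R a b -> R b c ->
  out g h (Some p) a (Some b) ++ out g h (Some a) b (Some c) != [::].
Proof.
by case: g h => [] [] // _; case: p; case: a => //; case: b => //; case: c.
Qed.

Lemma cycle_wl u k : cycle R u -> R (wl k u) (wl k.+1 u).
Proof. move=> Hu; exact: (cycle_R01 (cycle_iter k Hu)). Qed.

Lemma C_rot1' g h u : u != [::] ->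
  C g h (rot 1 u) = Rest g h u ++ B0 g h u /\ C g h u = B0 g h u ++ Rest g h u.
Proof. by case: u => [|a t] // _; rewrite C_rot1 C_cons. Qed.

Lemma size_rot1 (u : seq letter) : size (rot 1 u) = size u.
Proof. exact: size_rot. Qed.

Lemma headC g h u : okgh g h -> cycle R u -> u != [::] ->
  B0 g h u ++ B0 g h (rot 1 u) != [::] /\
  head lx (C g h u) = head lx (B0 g h u ++ B0 g h (rot 1 u)).
Proof.
move=> ok Hu Hne.
have NE : B0 g h u ++ B0 g h (rot 1 u) != [::].
  rewrite B0_E B0_rot1; apply: W1 => //.
  - exact: cycle_Rlast. - exact: (cycle_wl 0 Hu). - exact: (cycle_wl 1 Hu).
split=> //.
have [E1 E2] := C_rot1' g h Hne.
case E: (B0 g h u) => [|z zs]; last by rewrite E2 E.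
have Hne1 : rot 1 u != [::] by rewrite -size_eq0 size_rot size_eq0.
have [_ E3] := C_rot1' g h Hne1.
rewrite E2 E /= -(cats0 (Rest g h u)) -E -E1 E3.
by move: NE; rewrite E /=; case: (B0 g h (rot 1 u)).
Qed.

Lemma cycle_of_rots s :
  (forall r, r \in rots s -> R (head lx r) (head lx (rot 1 r))) -> cycle R s.
Proof.
case: s => [|a t] // H; rewrite /cycle; apply/(pathP lx) => i.
rewrite size_rcons => Hi.
have Hin : rot i (a :: t) \in rots (a :: t).
  by apply: (map_f (fun k => rot k (a :: t))); rewrite mem_iota.
move: (H _ Hin).
rewrite -rotS // head_rot //.
have -> : a :: rcons t a = rcons (a :: t) a by [].
rewrite nth_rcons /= Hi.
case: (ltnP i.+1 (size t).+1) => Hi1.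
  by rewrite head_rot // nth_rcons -ltnS Hi1.
have Ei : i = size t by lia.
by rewrite Ei rot_oversize // nth_rcons ltnn eqxx.
Qed.

Definition W2ok g h p a b c d : bool :=
  let B := out g h (Some p) a (Some b) in
  all (fun j => R (nth lx B j) (if j.+1 < size B then nth lx B j.+1
                 else head lx (out g h (Some a) b (Some c) ++ out g h (Some b) c (Some d))))
      (iota 0 (size B)).

Lemma W2 g h p a b c d : okgh g h -> R p a -> R a b -> R b c -> R c d -> W2ok g h p a b c d.
Proof.
by case: g h => [] [] // _; case: p; case: a => //; case: b => //; case: c => //; case: d.
Qed.

Lemma rot_ne (u : seq letter) i : u != [::] -> rot i u != [::].
Proof. by rewrite -!size_eq0 size_rot. Qed.

Lemma cycle_rot i u : cycle R u -> cycle R (rot i u).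
Proof. by rewrite rot_cycle. Qed.

Lemma C_blocks_nth g h u j : u != [::] -> j < size (B0 g h u) ->
  nth lx (C g h u) j = nth lx (B0 g h u) j.
Proof. by move=> Hne Hj; have [_ ->] := C_rot1' g h Hne; rewrite nth_cat Hj. Qed.

Lemma size_B0_C g h u : u != [::] -> size (B0 g h u) <= size (C g h u).
Proof. by move=> Hne; have [_ ->] := C_rot1' g h Hne; rewrite size_cat leq_addr. Qed.

Lemma rot_B0_C g h u : u != [::] -> rot (size (B0 g h u)) (C g h u) = C g h (rot 1 u).
Proof. by move=> Hne; have [-> ->] := C_rot1' g h Hne; rewrite rot_size_cat. Qed.

Lemma next_in_C g h u j : okgh g h -> cycle R u -> u != [::] -> j < size (B0 g h u) ->
  head lx (rot 1 (rot j (C g h u))) =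
  if j.+1 < size (B0 g h u) then nth lx (B0 g h u) j.+1
  else head lx (out g h (Some (wl 0 u)) (wl 1 u) (Some (wl 2 u)) ++
                out g h (Some (wl 1 u)) (wl 2 u) (Some (wl 3 u))).
Proof.
move=> ok Hu Hne Hj.
have HjC : j < size (C g h u) := leq_trans Hj (size_B0_C g h Hne).
rewrite -rotS //.
case: ifP => Hj1.
  rewrite head_rot; last exact: leq_trans Hj1 (size_B0_C g h Hne).
  exact: C_blocks_nth.
have -> : j.+1 = size (B0 g h u) by apply/eqP; rewrite eqn_leq Hj leqNgt Hj1.
rewrite rot_B0_C //.
have [_ ->] := headC ok (cycle_rot 1 Hu) (rot_ne 1 Hne).
by rewrite B0_rot1 B0_rot1.
Qed.

Lemma cycle_C g h v : okgh g h -> cycle R v -> cycle R (C g h v).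
Proof.
move=> ok Hv; apply: cycle_of_rots => r.
rewrite rots_C => /flattenP [rs /mapP [i Hi ->]].
have Hne : v != [::] by apply/eqP => E; move: Hi; rewrite E.
set u := rot i v.
have Hu : cycle R u by rewrite /u rot_cycle.
have Hune : u != [::] by rewrite /u rot_ne.
move=> /mapP [j]; rewrite mem_iota add0n => /andP [_ Hj] ->.
rewrite (next_in_C ok) // head_rot; last exact: leq_trans Hj (size_B0_C g h Hune).
rewrite C_blocks_nth //.
have := W2 ok (cycle_Rlast Hu) (cycle_wl 0 Hu) (cycle_wl 1 Hu) (cycle_wl 2 Hu).
rewrite /W2ok -B0_E => /allP /(_ j); rewrite mem_iota add0n Hj => /(_ isT).
done.
Qed.

Lemma lb_cons_rcons g h p q a m l :
  lb g h p q (a :: rcons m l) =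
  out g h p a (Some (head l m)) ::
  rcons (lb g h (Some a) (Some l) m) (out g h (Some (last a m)) l q).
Proof.
have -> : lb g h p q (a :: rcons m l) = out g h p a (Some (head l m)) :: lb g h (Some a) q (rcons m l).
  by rewrite /=; case: m.
by rewrite lb_rcons /= last_map_Some.
Qed.

Lemma strip_rcons k a0 s : strip_ends k.+1 (a0 :: rcons s (linv a0)) = strip_ends k s.
Proof.
rewrite /= last_rcons eqxx andbT.
have -> : (rcons s (linv a0) != [::]) = true by case: s.
by rewrite belast_rcons.
Qed.

Lemma strip_stop k s : (forall a t, s = a :: t -> t != [::] -> last a t != linv a) ->
  strip_ends k s = s.
Proof.
case: k => [|k] //; case: s => [|a t] // H /=.
by case: (t != [::]) (H a t erefl) => // /(_ isT) /negbTE ->.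
Qed.

Lemma cycle_end s : cycle R s -> forall a t, s = a :: t -> t != [::] -> last a t != linv a.
Proof.
move=> Hs a t E _; move: Hs; rewrite E /= rcons_path => /andP [_].
by rewrite /R linv_eq eq_sym.
Qed.

Lemma out_noc g h l a p n : okgh g h ->
  ~~ ((l == g) && (a == linv h) || (l == h) && (a == linv g)) ->
  out g h (Some l) a n = out g h None a n /\ out g h p l (Some a) = out g h p l None.
Proof. by case: g h => [] [] // _; case: l; case: a. Qed.

Lemma strip_L a0 s : cycle R s ->
  strip_ends (size (a0 :: rcons s (linv a0))) (a0 :: rcons s (linv a0)) = s.
Proof.
move=> Hs; rewrite [size _]/= size_rcons strip_rcons strip_stop //.
exact: cycle_end.
Qed.

Lemma out_c1 g h b z : okgh g h ->
  [/\ out g h None (linv h) b = [:: linv h], out g h (Some z) g None = [:: g; h],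
      out g h (Some g) (linv h) b = [::] & out g h (Some z) g (Some (linv h)) = [:: g]].
Proof. by case: g h => [] [] //. Qed.

Lemma out_c2 g h b z : okgh g h ->
  [/\ out g h None (linv g) b = [:: linv h; linv g], out g h (Some z) h None = [:: h],
      out g h (Some h) (linv g) b = [:: linv g] & out g h (Some z) h (Some (linv g)) = [::]].
Proof. by case: g h => [] [] //. Qed.

Lemma strip_case g h a l b z M : okgh g h ->
  cycle R (out g h (Some l) a (Some b) ++ M ++ out g h (Some z) l (Some a)) ->
  let L := out g h None a (Some b) ++ M ++ out g h (Some z) l None in
  strip_ends (size L) L = out g h (Some l) a (Some b) ++ M ++ out g h (Some z) l (Some a).
Proof.
move=> ok HC L; rewrite /L.
case Hc: ((l == g) && (a == linv h) || (l == h) && (a == linv g)).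
  case/orP: Hc => /andP [/eqP El /eqP Ea]; rewrite El Ea in HC *.
    have [-> -> -> ->] := out_c1 (Some b) z ok.
    have [_ _ E3 E4] := out_c1 (Some b) z ok; rewrite E3 E4 /= in HC.
    rewrite (_ : [:: linv h] ++ M ++ [:: g; h] = linv h :: rcons (M ++ [:: g]) (linv (linv h))).
      by rewrite strip_L.
    by rewrite linvK -cats1 -catA.
  have [-> -> -> ->] := out_c2 (Some b) z ok.
  have [_ _ E3 E4] := out_c2 (Some b) z ok; rewrite E3 E4 /= cats0 in HC.
  rewrite (_ : [:: linv h; linv g] ++ M ++ [:: h] = linv h :: rcons (linv g :: M) (linv (linv h))).
    by rewrite strip_L // cats0.
  by rewrite linvK -cats1.
have [E1 _] := out_noc (Some z) (Some b) ok (negbT Hc).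
have [_ E2] := out_noc (Some z) (Some b) ok (negbT Hc).
rewrite -E1 -E2 strip_stop //; exact: cycle_end.
Qed.

Lemma flatten_cons' (x : seq letter) s : flatten (x :: s) = x ++ flatten s.
Proof. by []. Qed.

Lemma act_C g h v : okgh g h -> cycle R v -> act (nimg g h) v = C g h v.
Proof.
move=> ok Hv; rewrite /act /cyc_reduce.
case: v Hv => [|a t] Hv //.
have Hs : sorted R (a :: t) by move: Hv; rewrite /= rcons_path => /andP [].
rewrite fr_lb //.
have HC := cycle_C ok Hv.
case/lastP: t Hv Hs HC => [|m l] Hv Hs HC.
  rewrite /C /cblocks /=.
  by clear HC Hv Hs; move: ok; case: g h => [] [] // _; case: a.
rewrite /C /cblocks lb_cons_rcons [last lx _]/= last_rcons [head lx _]/= lb_cons_rcons.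
rewrite /C /cblocks [last lx _]/= last_rcons [head lx _]/= lb_cons_rcons in HC.
rewrite !flatten_cons' !flatten_rcons in HC *.
exact: strip_case.
Qed.

Definition badpair (g h c a : letter) : bool :=
  ((c == g) && (a == linv h)) || ((c == linv g) && (a == h)).

Definition badfirst (g h : letter) (u : seq letter) : bool :=
  if u is a :: t then
    gk h a && (let xs := filter (gk g) t in
               (xs != [::]) && (head lx xs == last lx xs) && badpair g h (head lx xs) a)
  else false.

Arguments badfirst : simpl never.

Definition Phi g h v := count (badfirst g h) (rots v).

Definition SS (F : seq letter -> nat) (v : seq letter) := sumn [seq F (rot i v) | i <- iota 0 (size v)].

Lemma Phi_SS g h v : Phi g h v = SS (fun u => badfirst g h u : nat) v.
Proof. by rewrite /Phi /SS /rots -sumn_count -map_comp. Qed.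

Lemma Phi_C_SS g h g' h' v :
  Phi g h (C g' h' v) = SS (fun u => count (badfirst g h) (rotsB g' h' u)) v.
Proof. by rewrite /Phi rots_C count_flatten -map_comp. Qed.

Lemma sumn_le (f1 f2 : nat -> nat) (s : seq nat) : (forall x, x \in s -> f1 x <= f2 x) ->
  sumn (map f1 s) <= sumn (map f2 s).
Proof.
elim: s => [|x s IH] //= H; apply: leq_add; first exact: H (mem_head _ _).
by apply: IH => y Hy; apply: H; rewrite in_cons Hy orbT.
Qed.

Lemma sumn_lt (f1 f2 : nat -> nat) (s : seq nat) : (forall x, x \in s -> f1 x <= f2 x) ->
  (exists2 x, x \in s & f1 x < f2 x) -> sumn (map f1 s) < sumn (map f2 s).
Proof.
elim: s => [|x s IH] /= H [y]; first by [].
have Hs : forall z, z \in s -> f1 z <= f2 z by move=> z Hz; apply: H; rewrite in_cons Hz orbT.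
have Hx : f1 x <= f2 x by apply: H; exact: mem_head.
rewrite in_cons => /orP [/eqP -> Hlt|Hy Hlt].
  by rewrite -addSn; apply: leq_add Hlt (sumn_le Hs).
have H2 : sumn [seq f1 i | i <- s] < sumn [seq f2 i | i <- s] by apply: IH => //; exists y.
by rewrite -addnS; apply: leq_add Hx H2.
Qed.

Lemma SS_le F G v : (forall i, i < size v -> F (rot i v) <= G (rot i v)) -> SS F v <= SS G v.
Proof.
move=> H; rewrite /SS; apply: sumn_le => i; rewrite mem_iota add0n => /andP [_]; exact: H.
Qed.

Lemma SS_lt F G v : (forall i, i < size v -> F (rot i v) <= G (rot i v)) ->
  (exists2 i, i < size v & F (rot i v) < G (rot i v)) -> SS F v < SS G v.
Proof.
move=> H [i Hi Hlt]; rewrite /SS; apply: sumn_lt.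
  move=> j; rewrite mem_iota add0n => /andP [_]; exact: H.
by exists i => //; rewrite mem_iota add0n.
Qed.

Lemma iterD_rot (k l : nat) (u : seq letter) : iter k (rot 1) (iter l (rot 1) u) = iter (k + l) (rot 1) u.
Proof. by rewrite iterD. Qed.

Lemma rot_mod_small (s : seq letter) j : j <= size s -> rot (j %% size s) s = rot j s.
Proof.
rewrite leq_eqVlt => /orP [/eqP ->|Hj]; last by rewrite modn_small.
by rewrite modnn rot0 rot_size.
Qed.

Lemma iter_rot_mod k (s : seq letter) : 0 < size s -> iter k (rot 1) s = rot (k %% size s) s.
Proof.
move=> Hs; elim: k => [|k IH]; first by rewrite mod0n rot0.
rewrite iterS IH -rotS; last by rewrite ltn_mod.
rewrite -rot_mod_small; last by rewrite ltn_mod.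
by rewrite -[(k %% size s).+1]addn1 modnDml addn1.
Qed.

Lemma rot_iter i (s : seq letter) : i < size s -> rot i s = iter i (rot 1) s.
Proof. by move=> Hi; rewrite iter_rot_mod ?modn_small // (leq_ltn_trans _ Hi). Qed.

Lemma filter_out g h p a n : okgh g h -> filter (gk g) (out g h p a n) = filter (gk g) [:: a].
Proof.
rewrite /out; case: g h => [] [] // _; case: a => /=; do ?case: ifP => //.
Qed.

Lemma filter_lb g h p q v : okgh g h -> filter (gk g) (flatten (lb g h p q v)) = filter (gk g) v.
Proof.
move=> ok; elim: v p => [|a t IH] p //=.
by rewrite filter_cat IH filter_out //=; case: ifP.
Qed.

Lemma filter_C g h v : okgh g h -> filter (gk g) (C g h v) = filter (gk g) v.
Proof. exact: filter_lb. Qed.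

Lemma gk_hg g h a : okgh g h -> gk h a -> gk g a = false.
Proof. by case: g h => [] [] // _; case: a. Qed.

Lemma gk_cases g h a : okgh g h -> gk g a || gk h a.
Proof. by case: g h => [] [] // _; case: a. Qed.

Lemma bad_filter g h a t t' : filter (gk g) t = filter (gk g) t' ->
  badfirst g h (a :: t) = badfirst g h (a :: t').
Proof. by rewrite /badfirst /= => ->. Qed.

Lemma notbad_head g h a c t : gk g c -> ~~ badpair g h c a -> ~~ badfirst g h (a :: c :: t).
Proof. by move=> Hc Hb; rewrite /badfirst /= Hc /= (negbTE Hb) !andbF. Qed.

Lemma last_filter_rcons (P : pred letter) t c : P c -> last lx (filter P (rcons t c)) = c.
Proof. by move=> Hc; rewrite filter_rcons Hc last_rcons. Qed.

Lemma notbad_last g h a c t : gk g c -> ~~ badpair g h c a -> ~~ badfirst g h (a :: rcons t c).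
Proof.
move=> Hc Hb; rewrite /badfirst /= last_filter_rcons //.
by case: (_ == c) / eqP => [->|]; rewrite ?(negbTE Hb) ?andbF ?andbT // andbF.
Qed.

Lemma notbad_g g h a t : gk h a = false -> badfirst g h (a :: t) = false.
Proof. by rewrite /badfirst /= => ->. Qed.

Lemma B0_shapes g h p a b : okgh g h ->
  let B := out g h (Some p) a (Some b) in
  (B = [::] /\ gk h a) \/ (B = [:: a] /\ gk h a) \/ (B = [:: a] /\ gk h a = false) \/
      (B = [:: g; h] /\ a = g) \/ (B = [:: linv h; linv g] /\ a = linv g).
Proof.
rewrite /out; case: g h => [] [] // _; case: a => /=;
  do ?case: ifP => _; rewrite /= ?eqxx;
  do ?[by left; split|by right; left; split|by right; right; left; split
      |by right; right; right; left; split|by right; right; right; right; split].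
Qed.

Lemma badpair_gh g h : okgh g h -> badpair g h g h = false /\ badpair g h (linv g) (linv h) = false.
Proof. by case: g h => [] [] //. Qed.

Lemma gk_g g : gk g g. Proof. by rewrite /gk eqxx. Qed.
Lemma gk_linv g : gk g (linv g). Proof. by rewrite /gk eqxx orbT. Qed.
Lemma gk_hh g h : okgh g h -> gk h h = true /\ gk h g = false /\ gk h (linv g) = false.
Proof. by case: g h => [] [] //. Qed.

Lemma B0_shapes' g h a t : okgh g h ->
  let B := B0 g h (a :: t) in
  (B = [::] /\ gk h a) \/ (B = [:: a] /\ gk h a) \/ (B = [:: a] /\ gk h a = false) \/
      (B = [:: g; h] /\ a = g) \/ (B = [:: linv h; linv g] /\ a = linv g).
Proof. exact: B0_shapes. Qed.

Lemma own_le g h u : okgh g h -> u != [::] ->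
  count (badfirst g h) (rotsB g h u) <= badfirst g h u.
Proof.
move=> ok; case: u => [|a t] // _.
have [_ EC] := C_rot1' g h (isT : a :: t != [::]).
rewrite /rotsB EC.
have [bp1 bp2] := badpair_gh ok.
have [gh1 [gh2 gh3]] := gk_hh ok.
case: (@B0_shapes' g h a t ok)
  => [[E Ha]|[[E Ha]|[[E Ha]|[[E Ha]|[E Ha]]]]]; rewrite E //= ?rot0.
- rewrite addn0 (@bad_filter g h a _ t) // .
  have := filter_C (a :: t) ok; rewrite EC E /= (gk_hg ok Ha).
  by move=> ->.
- by rewrite notbad_g.
- rewrite Ha (notbad_g _ _ gh2) /= rot1_cons.
  have -> : rcons (h :: Rest g h (g :: t)) g = h :: rcons (Rest g h (g :: t)) g by [].
  by rewrite (negbTE (@notbad_last g h h g (Rest g h (g :: t)) (gk_g g) _)) ?bp1.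
- rewrite Ha (negbTE (@notbad_head g h (linv h) (linv g) (Rest g h (linv g :: t)) (gk_linv g) _)) ?bp2 //=.
  by rewrite rot1_cons /= (notbad_g _ _ gh3).
Qed.

Lemma badfirstP g h a t : badfirst g h (a :: t) ->
  [/\ gk h a, filter (gk g) t != [::],
      head lx (filter (gk g) t) = last lx (filter (gk g) t) &
      badpair g h (head lx (filter (gk g) t)) a].
Proof. by rewrite /badfirst /= => /andP [-> /andP [/andP [-> /eqP ->] ->]]; split. Qed.

Lemma badpair_h g h c : okgh g h -> badpair g h c h = (c == linv g).
Proof. by case: g h => [] [] // _; case: c. Qed.
Lemma badpair_lh g h c : okgh g h -> badpair g h c (linv h) = (c == g).
Proof. by case: g h => [] [] // _; case: c. Qed.
Lemma out_h_empty g h p : okgh g h -> out g h (Some p) h (Some (linv g)) = [::].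
Proof. by case: g h => [] [] //. Qed.
Lemma out_lh_empty g h b : okgh g h -> out g h (Some g) (linv h) (Some b) = [::].
Proof. by case: g h => [] [] //. Qed.
Lemma hkind_R g h a c : okgh g h -> gk g c = false -> R a c -> a = h \/ a = linv h ->
  c = a.
Proof.
by case: g h => [] [] // _; case: c; case: a => //= _ _ [] .
Qed.

Lemma hk_R g h a c : okgh g h -> gk g a = false -> gk g c = false -> R a c -> c = a.
Proof. by case: g h => [] [] // _; case: c; case: a. Qed.

Lemma head_filter_cons (P : pred letter) c t : P c -> head lx (filter P (c :: t)) = c.
Proof. by move=> /= ->. Qed.

Lemma walk_right g h d : okgh g h -> forall t,
  cycle R (h :: t) -> badfirst g h (h :: t) -> find (gk g) t = d ->
  exists k, badfirst g h (iter k (rot 1) (h :: t)) /\ B0 g h (iter k (rot 1) (h :: t)) = [::].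
Proof.
move=> ok; elim: d => [|d IH] t Hc Hb Hf.
  exists 0 => /=; split=> //.
  have [_ Hne Hhl Hbp] := badfirstP Hb.
  case: t Hc Hb Hf Hne Hhl Hbp => [|c t'] //= Hc Hb Hf.
  have Hgc : gk g c by move: Hf; case: (gk g c).
  rewrite Hgc /= badpair_h // => _ _ /eqP Ec.
  by rewrite /B0 rot1_cons /= Ec out_h_empty.
have [_ Hne Hhl Hbp] := badfirstP Hb.
case: t Hc Hb Hf Hne Hhl Hbp => [|c t'] //= Hc Hb Hf Hne Hhl Hbp.
have Hgc : gk g c = false by move: Hf; case: (gk g c).
have Rhc : R h c by move: Hc; rewrite /= => /andP [].
have Ec : c = h by apply: (hkind_R ok Hgc Rhc); left.
subst c.
have Hhas : has (gk g) t' by rewrite has_filter; move: Hne; rewrite /= Hgc.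
have [k [Hk1 Hk2]] : exists k, badfirst g h (iter k (rot 1) (h :: rcons t' h)) /\
                         B0 g h (iter k (rot 1) (h :: rcons t' h)) = [::].
  apply: IH.
  - by rewrite -rcons_cons -rot1_cons rot_cycle.
  - rewrite (@bad_filter g h h _ (h :: t')) //.
    by rewrite filter_rcons Hgc /= Hgc.
  - by rewrite -cats1 find_cat Hhas; move: Hf; rewrite Hgc => -[].
exists k.+1; by rewrite iterSr rot1_cons.
Qed.

Lemma rotr1_iter (u : seq letter) : rotr 1 u = iter (size u).-1 (rot 1) u.
Proof.
case: u => [|a t] //; rewrite -rot_iter /rotr //= subn1 //.
Qed.

Lemma walk_left g h d : okgh g h -> forall t,
  cycle R (linv h :: t) -> badfirst g h (linv h :: t) -> find (gk g) (rev t) = d ->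
  exists k, badfirst g h (iter k (rot 1) (linv h :: t)) /\
            B0 g h (iter k (rot 1) (linv h :: t)) = [::].
Proof.
move=> ok; elim: d => [|d IH] t Hc Hb Hf.
  exists 0 => /=; split=> //.
  have [_ Hne Hhl Hbp] := badfirstP Hb.
  case/lastP: t Hc Hb Hf Hne Hhl Hbp => [|t' c] //= Hc Hb Hf Hne Hhl Hbp.
  have Hgc : gk g c by move: Hf; rewrite rev_rcons /=; case: (gk g c).
  move: Hbp; rewrite Hhl filter_rcons Hgc last_rcons badpair_lh // => /eqP Ec.
  by rewrite /B0 /= last_rcons Ec out_lh_empty.
have [_ Hne Hhl Hbp] := badfirstP Hb.
case/lastP: t Hc Hb Hf Hne Hhl Hbp => [|t' c] //= Hc Hb Hf Hne Hhl Hbp.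
have Hgc : gk g c = false by move: Hf; rewrite rev_rcons /=; case: (gk g c).
have Rch : R c (linv h).
  by move: Hc; rewrite rcons_path => /andP [_]; rewrite last_rcons.
have Ec : linv h = c by apply: (hk_R ok Hgc _ Rch); exact: (gk_hg ok (gk_linv h)).
subst c.
have Hhas : has (gk g) (rev t') by rewrite has_rev has_filter; move: Hne; rewrite filter_rcons Hgc.
have [k [Hk1 Hk2]] : exists k, badfirst g h (iter k (rot 1) [:: linv h, linv h & t']) /\
                         B0 g h (iter k (rot 1) [:: linv h, linv h & t']) = [::].
  apply: IH.
  - by rewrite -(rotr1_rcons (linv h) (linv h :: t')) /rotr rot_cycle.
  - rewrite (@bad_filter g h (linv h) _ (rcons t' (linv h))) //.
    by rewrite filter_rcons Hgc /= (gk_hg ok (gk_linv h)).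
  - move: Hf; rewrite rev_rcons /= (gk_hg ok (gk_linv h)) => -[] <-.
    by rewrite rev_cons -cats1 find_cat Hhas.
exists (k + (size (rcons t' (linv h)))).
rewrite -iterD_rot.
have -> : iter (size (rcons t' (linv h))) (rot 1) (linv h :: rcons t' (linv h)) =
          [:: linv h, linv h & t'].
  by rewrite -(rotr1_rcons (linv h) (linv h :: t')) rotr1_iter.
by [].
Qed.

Lemma hk_cases h a : gk h a -> a = h \/ a = linv h.
Proof. by case/orP => /eqP ->; [left|right]. Qed.

Lemma exists_bad_rot g h v : 0 < Phi g h v -> exists2 i, i < size v & badfirst g h (rot i v).
Proof.
rewrite /Phi -has_count => /hasP [r /mapP [i]]; rewrite mem_iota add0n => /andP [_ Hi] -> Hb.
by exists i.
Qed.

Lemma iter_rot_idx k i (v : seq letter) : i < size v ->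
  iter k (rot 1) (rot i v) = rot ((k + i) %% size v) v.
Proof.
move=> Hi; rewrite rot_iter // iterD_rot iter_rot_mod //.
exact: leq_ltn_trans (leq0n i) Hi.
Qed.

Lemma own_dec g h v : okgh g h -> cycle R v -> Phi g h (C g h v) <= (Phi g h v).-1.
Proof.
move=> ok Hv.
have Hpt : forall i, i < size v ->
    count (badfirst g h) (rotsB g h (rot i v)) <= badfirst g h (rot i v).
  move=> i Hi; apply: own_le => //; apply: rot_ne; by case: v Hv Hi.
case: (posnP (Phi g h v)) => H0.
  have := @SS_le (fun u => count (badfirst g h) (rotsB g h u)) (fun u => badfirst g h u : nat) v Hpt.
  by rewrite -Phi_C_SS -Phi_SS H0.
have [i Hi Hb] := exists_bad_rot H0.
have Hne : rot i v != [::] by apply: rot_ne; apply/eqP => E; move: Hi; rewrite E.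
have Hc : cycle R (rot i v) by rewrite rot_cycle.
have [k [Hk1 Hk2]] : exists k, badfirst g h (iter k (rot 1) (rot i v)) /\
                      B0 g h (iter k (rot 1) (rot i v)) = [::].
  case E: (rot i v) Hne Hc Hb => [|a t] // _ Hc Hb.
  have [Ha _ _ _] := badfirstP Hb.
  case: (hk_cases Ha) => Ea; subst a.
    exact: (walk_right ok Hc Hb erefl).
  exact: (walk_left ok Hc Hb erefl).
rewrite iter_rot_idx // in Hk1 Hk2.
have Hj : (k + i) %% size v < size v by rewrite ltn_mod; case: (size v) Hi.
suff : Phi g h (C g h v) < Phi g h v by case: (Phi g h v).
rewrite Phi_C_SS Phi_SS; apply: SS_lt => //.
exists ((k + i) %% size v) => //.
by rewrite /rotsB Hk2 /= Hk1.
Qed.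


Definition okpair (g h g' h' : letter) : bool :=
  [|| [&& g == lx, h == ly, g' == ly & h' == lx], [&& g == ly, h == lx, g' == lx & h' == ly],
      [&& g == lx, h == lY, g' == ly & h' == lX] | [&& g == ly, h == lX, g' == lx & h' == lY]].

Lemma okpair_ok g h g' h' : okpair g h g' h' -> okgh g h /\ okgh g' h'.
Proof. by case: g h g' h' => [] [] [] []. Qed.

Lemma okpair_kinds g h g' h' : okpair g h g' h' -> forall a, gk h' a = gk g a /\ gk g' a = gk h a.
Proof. by case: g h g' h' => [] [] [] [] // _ []. Qed.

Lemma okpair_bp g h g' h' : okpair g h g' h' ->
  badpair g h h' g' = false /\ badpair g h (linv h') (linv g') = false.
Proof. by case: g h g' h' => [] [] [] []. Qed.

Definition W3ok g h g' h' q p a b c : bool :=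
  let B := out g' h' (Some p) a (Some b) in
  let L := out g' h' (Some q) p (Some a) in
  let Rb := out g' h' (Some a) b (Some c) in
  [|| ~~ [&& R q p, R p a, R a b & R b c], ~~ gk h a, B != [:: a],
      [&& gk g p, p == b & badpair g h b a],
      [&& L != [::], gk g (last lx L) & ~~ badpair g h (last lx L) a],
      [&& Rb != [::], gk g (head lx Rb) & ~~ badpair g h (head lx Rb) a] |
      [&& L != [::], Rb != [::], gk g (last lx L), gk g (head lx Rb) & last lx L != head lx Rb]].

Lemma W3 g h g' h' q p a b c : okpair g h g' h' -> W3ok g h g' h' q p a b c.
Proof.
by case: g h g' h' => [] [] [] [] // _; case: q; case: p; case: a; case: b; case: c.
Qed.


Lemma gk_gh g h a : okgh g h -> gk g a -> gk h a = false.
Proof. by case: g h => [] [] // _; case: a. Qed.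

Lemma notbad_lastL g h a z T : gk g z -> gk g a = false -> last a T = z ->
  ~~ badpair g h z a -> ~~ badfirst g h (a :: T).
Proof.
move=> Hz Ha; case/lastP: T => [|T y] /=.
  by move=> Ez; move: Hz; rewrite -Ez Ha.
by rewrite last_rcons => Ez; subst z; apply: notbad_last.
Qed.

Lemma notbad_headR g h a z T : gk g z -> gk g a = false -> head lx (T ++ [:: a]) = z ->
  ~~ badpair g h z a -> ~~ badfirst g h (a :: T).
Proof.
move=> Hz Ha; case: T => [|y T] /=.
  by move=> Ez; move: Hz; rewrite -Ez Ha.
by move=> Ez; subst z; apply: notbad_head.
Qed.

Lemma notbad_both g h a zl zr T : gk g zl -> gk g zr -> gk g a = false ->
  last a T = zl -> head lx (T ++ [:: a]) = zr -> zl != zr -> ~~ badfirst g h (a :: T).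
Proof.
move=> Hl Hr Ha; case: T => [|y T] /=.
  by move=> Ez; move: Hl; rewrite -Ez Ha.
move=> El Er; subst y.
case/lastP: T El => [|T y] /=; first by move=> ->; rewrite eqxx.
rewrite last_rcons => -> Hne.
rewrite /badfirst /= Hr /= filter_rcons Hl /= last_rcons.
by rewrite eq_sym (negbTE Hne) !andbF.
Qed.

Lemma head_rotr1 (u : seq letter) : head lx (rotr 1 u) = last lx u.
Proof. by case/lastP: u => [|s x] //; rewrite rotr1_rcons last_rcons. Qed.

Lemma last_ne (y z : letter) L : L != [::] -> last y L = last z L.
Proof. by case: L. Qed.

Lemma rotr_ne (u : seq letter) : u != [::] -> rotr 1 u != [::].
Proof. by rewrite -!size_eq0 size_rotr. Qed.

Lemma bad_local g h a t : t != [::] -> gk g (head lx t) -> gk g (last lx t) ->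
  head lx t = last lx t -> badpair g h (head lx t) a -> gk h a -> badfirst g h (a :: t).
Proof.
case: t => [|y t] // _ /= Hy Hz Ey Hbp Ha.
rewrite /badfirst /= Ha Hy /=.
case/lastP: t Hz Ey => [|s z] /=; first by move=> _ _; rewrite eqxx Hbp.
rewrite last_rcons => Hz Ey; rewrite filter_rcons Hz /= last_rcons Ey eqxx /=.
by rewrite -Ey Hbp.
Qed.

Lemma head_cat_ne (s1 s2 : seq letter) : s1 != [::] -> head lx (s1 ++ s2) = head lx s1.
Proof. by case: s1. Qed.

Lemma last_cat_ne (x : letter) (s1 s2 : seq letter) : s2 != [::] -> last x (s1 ++ s2) = last lx s2.
Proof. by move=> H; rewrite last_cat; apply: last_ne. Qed.

Lemma other_pt g h g' h' u : okpair g h g' h' -> cycle R u -> u != [::] ->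
  count (badfirst g h) (rotsB g' h' u) <= badfirst g h u.
Proof.
move=> okp Hu Hne.
have [ok ok'] := okpair_ok okp.
have K := okpair_kinds okp.
have [bp1 bp2] := okpair_bp okp.
have [_ EC] := C_rot1' g' h' Hne.
have [EL _] := C_rot1' g' h' (rotr_ne Hne).
rewrite rotrK in EL.
have [_ ER] := C_rot1' g' h' (rot_ne 1 Hne).
have [ER' _] := C_rot1' g' h' Hne.
rewrite ER in ER'.
case: u Hu Hne EC EL ER ER' => [|a t] // Hu _ EC EL ER ER'.
rewrite /rotsB EC.
case: (@B0_shapes' g' h' a t ok')
  => [[E Ha]|[[E Ha]|[[E Ha]|[[E Ha]|[E Ha]]]]]; rewrite E //= ?rot0.
- have Hga : gk g a by rewrite -(K a).1.
  by rewrite notbad_g // (gk_gh ok Hga).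
- case Hb: (badfirst g h (a :: t)); first by case: (badfirst _ _ _).
  have Hga : gk g a = false by rewrite -(K a).1.
  set u := a :: t.
  set q := last lx (rotr 1 u); set p := last lx u; set b := head lx (rot 1 u).
  set c := head lx (rot 1 (rot 1 u)).
  have Hur : cycle R (rotr 1 u) by rewrite /rotr rot_cycle.
  have Rqp : R q p by have := cycle_Rlast Hur; rewrite head_rotr1.
  have Rpa : R p a by exact: (cycle_Rlast Hu).
  have Rab : R a b by exact: (cycle_wl 0 Hu).
  have Rbc : R b c by exact: (cycle_wl 1 Hu).
  have Hha : gk h a by move: (gk_cases a ok); rewrite Hga.
  have EB : out g' h' (Some p) a (Some b) = [:: a] by exact: E.
  have EBL : B0 g' h' (rotr 1 u) = out g' h' (Some q) p (Some a) by rewrite /B0 head_rotr1 rotrK.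
  have EBR : B0 g' h' (rot 1 u) = out g' h' (Some a) b (Some c) by rewrite B0_rot1.
  have EC1 : C g' h' u = a :: Rest g' h' u by rewrite EC E.
  have HL : out g' h' (Some q) p (Some a) != [::] ->
            last a (Rest g' h' u) = last lx (out g' h' (Some q) p (Some a)).
    move=> Hne; rewrite -EBL; have := congr1 (last lx) EL; rewrite EC1 /= => ->.
    by rewrite last_cat_ne // EBL.
  have HR : out g' h' (Some a) b (Some c) != [::] ->
            head lx (Rest g' h' u ++ [:: a]) = head lx (out g' h' (Some a) b (Some c)).
    move=> Hne; rewrite -E -ER' head_cat_ne EBR //.
  suff : ~~ badfirst g h (a :: Rest g' h' u) by move/negbTE => ->.
  have := W3 q p a b c okp; rewrite /W3ok EB Rqp Rpa Rab Rbc Hha eqxx /=.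
  case/orP => [/and3P [Hp /eqP Epb Hbp]|].
    have Htne : t != [::] by move: Hp; rewrite /p /u; case: (t) => //=; rewrite Hga.
    have Hbt : b = head lx t by rewrite /b /u; case: (t) Htne.
    have Hpt : p = last lx t by rewrite /p /u; case: (t) Htne.
    rewrite -Epb in Hbp.
    have Eh : head lx t = p by rewrite -Hbt Epb.
    have El : last lx t = p by rewrite -Hpt.
    have Hbad : badfirst g h (a :: t).
      by apply: bad_local => //; rewrite ?Eh ?El.
    by rewrite Hbad in Hb.
  case/orP => [/and3P [HLne HLg HLb]|].
    by apply: (notbad_lastL HLg Hga (HL HLne) HLb).
  case/orP => [/and3P [HRne HRg HRb]|].
    by apply: (notbad_headR HRg Hga (HR HRne) HRb).
  case/and5P => [HLne HRne HLg HRg Hdiff].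
  exact: (@notbad_both g h a _ _ _ HLg HRg Hga (HL HLne) (HR HRne) Hdiff).
- rewrite (negbTE (@notbad_head g h g' h' _ _ _)) ?bp1 //=; last by rewrite -(K h').1 /gk eqxx.
  by rewrite rot1_cons /= notbad_g // -(K h').2 (gk_hg ok' (gk_g h')).
- rewrite notbad_g /=; last by rewrite -(K (linv h')).2 (gk_hg ok' (gk_linv h')).
  rewrite rot1_cons; set X := Rest g' h' (a :: t).
  have -> : rcons (linv g' :: X) (linv h') = linv g' :: rcons X (linv h') by [].
  rewrite (negbTE (@notbad_last g h (linv g') (linv h') X _ _)) ?bp2 //.
  by rewrite -(K (linv h')).1 gk_linv.
Qed.

Lemma other_le g h g' h' v : okpair g h g' h' -> cycle R v -> Phi g h (C g' h' v) <= Phi g h v.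
Proof.
move=> okp Hv; rewrite Phi_C_SS Phi_SS; apply: SS_le => i Hi.
apply: other_pt => //; first by rewrite rot_cycle.
by apply: rot_ne; apply/eqP => E; move: Hi; rewrite E.
Qed.

Definition canc (g h a b : letter) : bool :=
  ((a == g) && (b == linv h)) || ((a == h) && (b == linv g)).

Definition xsf g (u : seq letter) := filter (gk g) (behead u).

Definition Pf g h (u : seq letter) : bool :=
  (head lx u == h) && (xsf g u != [::]) && (last lx (xsf g u) == g) && (head lx (xsf g u) == linv g).
Definition Bf g h (u : seq letter) : bool :=
  (head lx u == h) && (head lx (rot 1 u) == linv g) && (xsf g u != [::]) && (last lx (xsf g u) == g).
Definition T1f g h (u : seq letter) : bool :=
  trivial_at g (gk h) u && (head lx (rot 1 u) == linv h).
Definition T2f g h (u : seq letter) : bool :=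
  trivial_at g (gk h) u && (head lx (rot 1 u) == h).
Definition J1f g h (u : seq letter) : bool := (head lx u == g) && (head lx (rot 1 u) == linv h).
Definition J2f g h (u : seq letter) : bool := (head lx u == h) && (head lx (rot 1 u) == linv g).

Lemma ngk g h c : okgh g h -> ~~ gk h c = gk g c.
Proof. by case: g h => [] [] // _; case: c. Qed.

Lemma nth_find_gk g h t : okgh g h ->
  (nth g t (find (fun c => ~~ gk h c) t) == linv g) =
  (filter (gk g) t != [::]) && (head lx (filter (gk g) t) == linv g).
Proof.
move=> ok; elim: t => [|c s IH].
  by rewrite /=; case: (g) => /=.
rewrite /= (ngk c ok); by case: ifP.
Qed.

Lemma triv_char g h a b0 t : okgh g h ->
  trivial_at g (gk h) (a :: b0 :: t) =
  [&& a == g, gk h b0, filter (gk g) t != [::] & head lx (filter (gk g) t) == linv g].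
Proof.
move=> ok; rewrite /trivial_at /=.
case: (gk h b0) => /=; last by rewrite !andbF.
by rewrite nth_find_gk.
Qed.

Lemma triv_nil g h a : trivial_at g (gk h) [:: a] = false.
Proof. by rewrite /trivial_at /=; case: (gk h a) => //=; rewrite andbF. Qed.

Lemma idb g h a t : okgh g h -> cycle R (a :: t) ->
  T2f g h (a :: t) + Pf g h (a :: t) = Bf g h (a :: t) + Pf g h (rot 1 (a :: t)).
Proof.
move=> ok; case: t => [|b0 t].
  by rewrite /T2f /Pf /Bf /xsf triv_nil /= !andbF.
move=> /= /andP [Rab _].
rewrite /T2f /Pf /Bf /xsf rot1_cons triv_char //= filter_rcons.
move: (filter (gk g) t) => ys.
move: ok Rab; case: g h => [] [] // _; case: a; case: b0 => //=.
all: move=> _; case: ys => [|y ys] //=; rewrite ?last_rcons //.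
all: move: (last y ys) => l0.
all: by case: y; case: l0.
Qed.

Lemma ida g h a t : okgh g h -> ~~ badfirst g h (rot 1 (a :: t)) ->
  T1f g h (a :: t) = J1f g h (a :: t).
Proof.
move=> ok; case: t => [|b0 t].
  by rewrite /T1f /J1f triv_nil /=; move: ok; case: g h => [] [] // _; case: a.
rewrite /T1f /J1f rot1_cons triv_char // /badfirst /= filter_rcons.
move: (filter_all (gk g) t); move: (filter (gk g) t) => ys.
move: ok; case: g h => [] [] // _; case: a; case: b0 => //=.
all: case: ys => [|y ys] //=; rewrite ?last_rcons //.
all: move: (last y ys) => l0.
all: by case: y; case: l0.
Qed.


Lemma all_last g y ys : gk g y -> all (gk g) ys -> gk g (last y ys).
Proof. by elim: ys y => [|z ys IH] y //= _ /andP [Hz Hys]; apply: IH. Qed.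

Lemma idc g h a t : okgh g h -> ~~ badfirst g h (a :: t) -> Bf g h (a :: t) = J2f g h (a :: t).
Proof.
move=> ok; case: t => [|b0 t].
  by rewrite /Bf /J2f /xsf /= !andbF; move: ok; case: g h => [] [] // _; case: a.
rewrite /Bf /J2f /xsf rot1_cons /badfirst /=.
move: (filter_all (gk g) t); move: (filter (gk g) t) => ys.
move: ok; case: g h => [] [] // _; case: a; case: b0 => //=.
all: case: ys => [|y ys] //=; rewrite ?last_rcons //.
all: move=> /andP [Hy Hys]; have Hl := all_last Hy Hys; move: Hl Hy; move: (last y ys) => l0.
all: by case: y; case: l0.
Qed.

Lemma sumn_map_add (f1 f2 : nat -> nat) (s : seq nat) :
  sumn [seq f1 i + f2 i | i <- s] = sumn (map f1 s) + sumn (map f2 s).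
Proof. by elim: s => [|x s IH] //=; rewrite IH addnACA. Qed.

Lemma SS_add F G v : SS (fun u => F u + G u) v = SS F v + SS G v.
Proof. exact: sumn_map_add. Qed.

Lemma SS_eq F G v : (forall i, i < size v -> F (rot i v) = G (rot i v)) -> SS F v = SS G v.
Proof.
move=> H; rewrite /SS; congr sumn; apply/eq_in_map => i.
rewrite mem_iota add0n => /andP [_]; exact: H.
Qed.

Lemma sumn_rot1 (s : seq nat) : sumn (rot 1 s) = sumn s.
Proof. by case: s => [|x s] //=; rewrite rot1_cons -cats1 sumn_cat /= addn0 addnC. Qed.

Lemma SS_shift F v : SS (fun u => F (rot 1 u)) v = SS F v.
Proof.
rewrite /SS; case Hn: (size v) => [|n] //.
have E1 : [seq F (rot 1 (rot i v)) | i <- iota 0 n.+1] =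
          [seq F (rot 1 (rot i v)) | i <- iota 0 n] ++ [:: F v].
  have -> : iota 0 n.+1 = iota 0 n ++ [:: n] by rewrite -addn1 iotaD.
  by rewrite map_cat /= -rotS ?Hn // rot_oversize ?Hn.
have E2 : rot 1 [seq F (rot i v) | i <- iota 0 n.+1] = [seq F (rot i v) | i <- iota 1 n] ++ [:: F v].
  by rewrite /= rot1_cons rot0 -cats1.
rewrite E1; transitivity (sumn (rot 1 [seq F (rot i v) | i <- iota 0 n.+1])); last exact: sumn_rot1.
rewrite E2; congr (sumn (_ ++ _)).
rewrite (_ : iota 1 n = map succn (iota 0 n)); last exact: (iotaDl 1 0).
rewrite -map_comp; apply/eq_in_map => i; rewrite mem_iota add0n => /andP [_ Hi] /=.
by rewrite -rotS // Hn ltnS ltnW.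
Qed.

Lemma map_head_rot (v : seq letter) : [seq head lx (rot i v) | i <- iota 0 (size v)] = v.
Proof.
apply: (@eq_from_nth _ lx); first by rewrite size_map size_iota.
move=> i; rewrite size_map size_iota => Hi.
by rewrite (nth_map 0) ?size_iota // nth_iota // add0n head_rot.
Qed.

Lemma cblocks_map g h v : cblocks g h v = [seq B0 g h (rot i v) | i <- iota 0 (size v)].
Proof.
apply: (@eq_from_nth _ [::]); first by rewrite size_map size_iota size_lb.
move=> i; rewrite size_lb => Hi.
by rewrite (nth_map 0) ?size_iota // nth_iota // add0n nth_cblocks.
Qed.

Lemma size_subst_SS g h v : size (subst (nimg g h) v) = SS (fun u => size (nimg g h (head lx u))) v.
Proof.
rewrite /subst size_flatten /shape -map_comp.
by rewrite -{1}(map_head_rot v) -map_comp.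
Qed.

Lemma size_C_SS g h v : size (C g h v) = SS (fun u => size (B0 g h u)) v.
Proof. by rewrite /C size_flatten /shape cblocks_map -map_comp. Qed.

Lemma size_pt g h p a b : okgh g h ->
  size (nimg g h a) = size (out g h (Some p) a (Some b)) + canc g h p a + canc g h a b.
Proof. by case: g h => [] [] // _; case: p; case: a; case: b. Qed.

Definition Jc g h (u : seq letter) : nat := canc g h (head lx u) (head lx (rot 1 u)).
Definition Lc g h (u : seq letter) : nat := canc g h (last lx u) (head lx u).

Lemma cancelled_SS g h v : okgh g h -> cycle R v ->
  cancelled_pairs (nimg g h) v = SS (Jc g h) v.
Proof.
move=> ok Hv; rewrite /cancelled_pairs act_C // size_subst_SS size_C_SS.
have -> : SS (fun u => size (nimg g h (head lx u))) v =
          SS (fun u => size (B0 g h u) + Lc g h u) v + SS (Jc g h) v.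
  rewrite -SS_add; apply: SS_eq => i _; rewrite /Lc /Jc /B0 -addnA.
  by rewrite (size_pt (last lx (rot i v)) _ (head lx (rot 1 (rot i v))) ok) addnA.
rewrite SS_add.
have -> : SS (Lc g h) v = SS (Jc g h) v.
  rewrite -SS_shift; apply: SS_eq => i _; by rewrite /Lc /Jc last_rot1.
by rewrite -addnA addKn addnn -muln2 mulnK.
Qed.

Lemma trivial_SS g h v : trivial_count g (gk h) v = SS (fun u => trivial_at g (gk h) u : nat) v.
Proof. by rewrite /trivial_count /SS sumn_count. Qed.

Lemma Jc_split g h u : okgh g h -> Jc g h u = J1f g h u + J2f g h u.
Proof.
move=> ok; rewrite /Jc /J1f /J2f /canc.
by move: ok; case: g h => [] [] // _; case: (head lx u); case: (head lx (rot 1 u)).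
Qed.

Lemma triv_split g h u : okgh g h -> (trivial_at g (gk h) u : nat) = T1f g h u + T2f g h u.
Proof.
move=> ok; rewrite /T1f /T2f.
case: u => [|a [|b0 t]]; first by [].
  by rewrite triv_nil.
rewrite triv_char // rot1_cons /=.
move: ([seq x <- t | gk g x] != [::]) (head lx [seq x <- t | gk g x] == linv g) => X Y.
by move: ok; case: g h => [] [] // _; case: a; case: b0; case: X; case: Y.
Qed.

Lemma zero_case g h v : okgh g h -> cycle R v ->
  (forall i, i < size v -> ~~ badfirst g h (rot i v)) ->
  cancelled_pairs (nimg g h) v = trivial_count g (gk h) v.
Proof.
move=> ok Hv Hz.
rewrite cancelled_SS // trivial_SS.
have -> : SS (Jc g h) v = SS (J1f g h) v + SS (J2f g h) v.
  by rewrite -SS_add; apply: SS_eq => i _; rewrite Jc_split.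
have -> : SS (fun u => trivial_at g (gk h) u : nat) v = SS (T1f g h) v + SS (T2f g h) v.
  by rewrite -SS_add; apply: SS_eq => i _; rewrite triv_split.
have -> : SS (T1f g h) v = SS (J1f g h) v.
  apply: SS_eq => i Hi; case E: (rot i v) => [|a t].
    by move: Hi; rewrite -(size_rot i v) E.
  rewrite ida // -E.
  have -> : rot 1 (rot i v) = rot ((1 + i) %% size v) v by rewrite -iter_rot_idx.
  by apply: Hz; rewrite ltn_mod; case: (size v) Hi.
have -> : SS (T2f g h) v = SS (J2f g h) v.
  have H1 : SS (fun u => T2f g h u + Pf g h u) v = SS (fun u => Bf g h u + Pf g h (rot 1 u)) v.
    apply: SS_eq => i Hi; case E: (rot i v) => [|a t]; first by move: Hi; rewrite -(size_rot i v) E.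
    rewrite idb // -E rot_cycle //.
  rewrite !SS_add (SS_shift (Pf g h)) in H1.
  have H2 : SS (T2f g h) v = SS (Bf g h) v by move/eqP: H1; rewrite eqn_add2r => /eqP.
  rewrite H2; apply: SS_eq => i Hi; case E: (rot i v) => [|a t]; first by move: Hi; rewrite -(size_rot i v) E.
  by rewrite idc // -E Hz.
by [].
Qed.

Lemma subst_ext f f' w : f =1 f' -> subst f w = subst f' w.
Proof. by move=> H; rewrite /subst (eq_map H). Qed.

Lemma act_ext f f' : f =1 f' -> act f =1 act f'.
Proof. by move=> H w; rewrite /act (subst_ext _ H). Qed.

Lemma cancelled_ext f f' w : f =1 f' -> cancelled_pairs f w = cancelled_pairs f' w.
Proof. by move=> H; rewrite /cancelled_pairs (subst_ext _ H) (act_ext H). Qed.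

Lemma chain_ext fs fs' ft ft' c w : fs =1 fs' -> ft =1 ft' ->
  chain_apply fs ft c w = chain_apply fs' ft' c w.
Proof.
move=> Hs Ht; rewrite /chain_apply; elim: c w => [|lm c IH] w //=.
by rewrite IH (eq_iter (act_ext Hs)) (eq_iter (act_ext Ht)).
Qed.

Lemma trivial_ext g P Q w : P =1 Q -> trivial_count g P w = trivial_count g Q w.
Proof.
move=> H; rewrite /trivial_count; apply: eq_count => i /=.
case: (rot i w) => [|a t] //=.
by rewrite (@eq_find _ (fun c => ~~ P c) (fun c => ~~ Q c)) // => c; rewrite H.
Qed.

Lemma sum_l_cons lm c : sum_l (lm :: c) = lm.1 + sum_l c.
Proof. by rewrite /sum_l big_cons. Qed.
Lemma sum_m_cons lm c : sum_m (lm :: c) = lm.2 + sum_m c.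
Proof. by rewrite /sum_m big_cons. Qed.

Lemma iter_dec (f : seq letter -> seq letter) (Ph : seq letter -> nat) n v :
  (forall v, cycle R v -> cycle R (f v) /\ Ph (f v) <= (Ph v).-1) ->
  cycle R v -> cycle R (iter n f v) /\ Ph (iter n f v) <= Ph v - n.
Proof.
move=> H Hv; elim: n => [|n [IH1 IH2]] /=; first by rewrite subn0.
have [H1 H2] := H _ IH1; split=> //; lia.
Qed.

Lemma iter_noninc (f : seq letter -> seq letter) (Ph : seq letter -> nat) n v :
  (forall v, cycle R v -> cycle R (f v) /\ Ph (f v) <= Ph v) ->
  cycle R v -> cycle R (iter n f v) /\ Ph (iter n f v) <= Ph v.
Proof.
move=> H Hv; elim: n => [|n [IH1 IH2]] //=.
have [H1 H2] := H _ IH1; split=> //; lia.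
Qed.

Lemma chain_l f1 f2 Ph c v :
  (forall v, cycle R v -> cycle R (f1 v) /\ Ph (f1 v) <= (Ph v).-1) ->
  (forall v, cycle R v -> cycle R (f2 v) /\ Ph (f2 v) <= Ph v) ->
  cycle R v ->
  cycle R (foldl (fun v lm => iter lm.2 f2 (iter lm.1 f1 v)) v c) /\
  Ph (foldl (fun v lm => iter lm.2 f2 (iter lm.1 f1 v)) v c) <= Ph v - sum_l c.
Proof.
move=> H1 H2; elim: c v => [|lm c IH] v Hv /=; first by rewrite /sum_l big_nil subn0.
have [A1 A2] := iter_dec lm.1 H1 Hv.
have [B1 B2] := iter_noninc lm.2 H2 A1.
have [C1 C2] := IH _ B1.
split=> //; rewrite sum_l_cons; lia.
Qed.

Lemma chain_m f1 f2 Ph c v :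
  (forall v, cycle R v -> cycle R (f1 v) /\ Ph (f1 v) <= Ph v) ->
  (forall v, cycle R v -> cycle R (f2 v) /\ Ph (f2 v) <= (Ph v).-1) ->
  cycle R v ->
  cycle R (foldl (fun v lm => iter lm.2 f2 (iter lm.1 f1 v)) v c) /\
  Ph (foldl (fun v lm => iter lm.2 f2 (iter lm.1 f1 v)) v c) <= Ph v - sum_m c.
Proof.
move=> H1 H2; elim: c v => [|lm c IH] v Hv /=; first by rewrite /sum_m big_nil subn0.
have [A1 A2] := iter_noninc lm.1 H1 Hv.
have [B1 B2] := iter_dec lm.2 H2 A1.
have [C1 C2] := IH _ B1.
split=> //; rewrite sum_m_cons; lia.
Qed.

Lemma own_step g h v : okgh g h -> cycle R v ->
  cycle R (act (nimg g h) v) /\ Phi g h (act (nimg g h) v) <= (Phi g h v).-1.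
Proof. by move=> ok Hv; rewrite act_C //; split; [exact: cycle_C|exact: own_dec]. Qed.

Lemma other_step g h g' h' v : okpair g h g' h' -> cycle R v ->
  cycle R (act (nimg g' h') v) /\ Phi g h (act (nimg g' h') v) <= Phi g h v.
Proof.
move=> okp Hv; have [ok ok'] := okpair_ok okp.
by rewrite act_C //; split; [exact: cycle_C|exact: other_le].
Qed.

Lemma Phi_le_size g h v : Phi g h v <= size v.
Proof. by rewrite /Phi (leq_trans (count_size _ _)) // /rots size_map size_iota. Qed.

Lemma Phi0_all g h v : Phi g h v = 0 -> forall i, i < size v -> ~~ badfirst g h (rot i v).
Proof.
move=> H i Hi; apply/negP => Hb.
have : 0 < Phi g h v.
  rewrite /Phi -has_count; apply/hasP; exists (rot i v) => //.
  by apply: (map_f (fun k => rot k v)); rewrite mem_iota.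
by rewrite H.
Qed.

Lemma final_l g h g' h' c w : okpair g h g' h' -> cycle R w -> size w <= sum_l c ->
  let v := chain_apply (nimg g h) (nimg g' h') c w in
  cancelled_pairs (nimg g h) v = trivial_count g (gk h) v.
Proof.
move=> okp Hw Hs v; have [ok ok'] := okpair_ok okp.
have [Hv HP] := @chain_l _ _ (Phi g h) c w (fun v => @own_step g h v ok) (fun v => @other_step g h g' h' v okp) Hw.
apply: zero_case => //; apply: Phi0_all.
have := Phi_le_size g h w; rewrite /v /chain_apply; lia.
Qed.

Lemma final_m g h g' h' c w : okpair g' h' g h -> cycle R w -> size w <= sum_m c ->
  let v := chain_apply (nimg g h) (nimg g' h') c w in
  cancelled_pairs (nimg g' h') v = trivial_count g' (gk h') v.
Proof.
move=> okp Hw Hs v; have [ok' ok] := okpair_ok okp.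
have [Hv HP] := @chain_m _ _ (Phi g' h') c w (fun v => @other_step g' h' g h v okp) (fun v => @own_step g' h' v ok') Hw.
apply: zero_case => //; apply: Phi0_all.
have := Phi_le_size g' h' w; rewrite /v /chain_apply; lia.
Qed.

Theorem lemma2p5 (w : seq letter) (c : seq (nat * nat)) :
  cyc_reduced w ->
  (size w <= sum_l c ->
     no_proper_cancellation_sigma sigma_img (chain_apply sigma_img tau_img c w)) /\
  (size w <= sum_m c ->
     no_proper_cancellation_tau tau_img (chain_apply sigma_img tau_img c w)) /\
  (size w <= sum_l c ->
     no_proper_cancellation_sigma sigmaI_img (chain_apply sigmaI_img tauI_img c w)) /\
  (size w <= sum_m c ->
     no_proper_cancellation_tau tauI_img (chain_apply sigmaI_img tauI_img c w)).
Proof.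
rewrite cycE => Hw.
have Es : sigma_img =1 nimg lx ly by case.
have Et : tau_img =1 nimg ly lx by case.
have EsI : sigmaI_img =1 nimg lx lY by case.
have EtI : tauI_img =1 nimg ly lX by case.
rewrite /no_proper_cancellation_sigma /no_proper_cancellation_tau.
rewrite !(chain_ext _ _ Es Et) !(chain_ext _ _ EsI EtI).
rewrite (cancelled_ext _ Es) (cancelled_ext _ Et) (cancelled_ext _ EsI) (cancelled_ext _ EtI).
split; last split; last split; move=> Hs.
- rewrite (@trivial_ext _ _ (gk ly)); last by case.
  exact: (final_l (g':=ly) (h':=lx)).
- rewrite (@trivial_ext _ _ (gk lx)); last by case.
  exact: (final_m (g:=lx) (h:=ly)).
- rewrite (@trivial_ext _ _ (gk lY)); last by case.
  exact: (final_l (g':=ly) (h':=lX)).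
- rewrite (@trivial_ext _ _ (gk lX)); last by case.
  exact: (final_m (g:=lx) (h:=lY)).
Qed.
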